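(* Let $(M,f,g)$ be an $(m,n)$-hypermodule over a commutative Krasner $(m,n)$-hyperring $(R,f',g')$ with scalar identity $1$, and let $Q$ be a proper subhypermodule of $M$. Let $S$ be a nonempty subset of $M\setminus\{0\}$ such that for all hyperideals $I_1,\dots,I_{n-1}$ of $R$ and all subhypermodules $N_1,N_2$ of $M$, if $f(N_1,g(I_i,1^{(n-2)},N_2),0^{(m-2)})\cap S\neq\varnothing$ for every $1\le i\le n-1$ then $f(N_1,g(I_1^{n-1},N_2),0^{(m-2)})\cap S\neq\varnothing$. If $Q$ is maximal (among subhypermodules of $M$) with respect to the property $Q\cap S=\varnothing$, then $Q$ is an $n$-ary classical prime subhypermodule of $M$.
   Context: A commutative Krasner $(m,n)$-hyperring with scalar identity $1$ is a triple $(R,f',g')$ where $(R,f')$ is a canonical $m$-ary hypergroup with zero $0$, $(R,g')$ is a commutative $n$-ary semigroup, $g'$ is distributive over $f'$, $0$ is a zero element for $g'$, and $g'(x,1^{(n-1)})=x$. Notation: $x_i^j$ denotes $x_i,\dots,x_j$ and $x^{(k)}$ denotes $x$ repeated $k$ times. A hyperideal $I$ of $R$ is a nonempty subset with $(I,f')$ an $m$-ary subhypergroup and $g'(x_1^{i-1},I,x_{i+1}^n)\subseteq I$. An $(m,n)$-hypermodule over $R$ is a triple $(M,f,g)$ with $(M,f)$ a canonical $m$-ary hypergroup with zero $0$ and $g:R^{n-1}\times M\to P^*(M)$ satisfying: $g(r_1^{n-1},f(x_1^m))=f(g(r_1^{n-1},x_1),\dots,g(r_1^{n-1},x_m))$;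 $g(r_1^{i-1},f'(s_1^m),r_{i+1}^{n-1},x)=f(g(r_1^{i-1},s_1,r_{i+1}^{n-1},x),\dots,g(r_1^{i-1},s_m,r_{i+1}^{n-1},x))$; $g(r_1^{i-1},g'(r_i^{i+n-1}),r_{i+n}^{2n-2},x)=g(r_1^{n-1},g(r_n^{2n-2},x))$; $g(r_1^{i-1},0,r_{i+1}^{n-1},x)=\{0\}$; moreover $g(1^{(n-1)},a)=\{a\}$. Operations applied to subsets mean unions over elements. A subhypermodule of $M$ is a nonempty $N\subseteq M$ with $(N,f)$ an $m$-ary subhypergroup and $g(R^{(n-1)},N)\subseteq N$. A proper subhypermodule $Q$ is $n$-ary classical prime if for all $r_1^{n-1}\in R$, $a\in M$, $g(r_1^{n-1},a)\subseteq Q$ implies $g(r_i,1^{(n-2)},a)\subseteq Q$ for some $1\le i\le n-1$. *)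

(* Defs.v *)
From mathcomp Require Import all_boot.
Set Implicit Arguments.
Unset Strict Implicit.
Unset Printing Implicit Defensive.

(* Sequences of arguments are written as nat -> T; an m-ary operation on
   ('I_m -> T) is applied to the first m entries of such a sequence. *)
Definition app (T U : Type) (m : nat) (op : ('I_m -> T) -> U) (x : nat -> T) : U :=
  op (fun i : 'I_m => x (nat_of_ord i)).

Definition scons (T : Type) (a : T) (s : nat -> T) : nat -> T :=
  fun k => if k is k'.+1 then s k' else a.

Definition set_at (T : Type) (x : nat -> T) (i : nat) (y : T) : nat -> T :=
  fun k => if k == i then y else x k.

Definition seteq (T : Type) (A B : T -> Prop) : Prop := forall z, A z <-> B z.
Definition subset (T : Type) (A B : T -> Prop) : Prop := forall z, A z -> B z.
Definition meets (T : Type) (A B : T -> Prop) : Prop := exists z, A z /\ B z.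

Section Hyperop.
Variables (T : Type) (m : nat) (f : ('I_m -> T) -> T -> Prop).

(* f applied to subsets A_0, ..., A_{m-1}: union over elements *)
Definition hopS (A : nat -> T -> Prop) : T -> Prop :=
  fun z => exists x : nat -> T, (forall k, k < m -> A k (x k)) /\ app f x z.

(* f(x_0^{i-1}, f(x_i^{i+m-1}), x_{i+m}^{2m-2}) *)
Definition nest (x : nat -> T) (i : nat) : T -> Prop :=
  hopS (fun k => if k < i then eq (x k)
                 else if k == i then app f (fun j => x (i + j))
                 else eq (x (k + m.-1))).

(* (P, f) is a canonical m-ary hypergroup with zero e (all quantifiers
   relativised to the subset P; take P := fun _ => True for the whole type) *)
Definition chg_on (P : T -> Prop) (e : T) : Prop :=
  (
      forall x : 'I_m -> T, (forall i, P (x i)) -> exists z, f x z) /\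
      (
      forall x : nat -> T, (forall k, k < (m + m).-1 -> P (x k)) ->
        forall i, i < m -> seteq (nest x i) (nest x 0)) /\
      (
      P e /\ (forall x, P x -> seteq (app f (scons x (fun _ => e))) (eq x)) /\
      (forall e', P e' -> (forall x, P x -> seteq (app f (scons x (fun _ => e'))) (eq x)) ->
         e' = e)) /\
      (
      forall x, P x -> exists! y, P y /\ app f (scons x (scons y (fun _ => e))) e) /\
      ((* reversibility: x in f(x_0^{m-1}) implies
         x_i in f(-x_{i-1},...,-x_0, x, -x_{m-1},...,-x_{i+1}) *)
      forall (x : T) (xs inv : nat -> T), P x ->
         (forall k, k < m -> [/\ P (xs k), P (inv k) &
                               app f (scons (xs k) (scons (inv k) (fun _ => e))) e]) ->
         app f xs x ->
         forall i, i < m ->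
           app f (fun p => if p < i then inv (i.-1 - p)
                           else if p == i then x else inv (m + i - p)) (xs i)) /\
      (
      forall (x : 'I_m -> T), (forall i, P (x i)) ->
        forall s : 'I_m -> 'I_m, bijective s -> seteq (f x) (f (fun i => x (s i)))).

Definition subhypergroup (N : T -> Prop) : Prop :=
  (forall x : 'I_m -> T, (forall i, N (x i)) -> forall z, f x z -> N z) /\
  exists e, chg_on N e.

End Hyperop.

Section Krasner.
Variables (R : Type) (m n : nat) (f' : ('I_m -> R) -> R -> Prop) (g' : ('I_n -> R) -> R)
          (zero one : R).

Definition krasner_hyperring : Prop :=
  chg_on f' (fun _ => True) zero /\
      (
      forall x : nat -> R, forall i, i < n ->
        app g' (fun k => if k < i then x k
                         else if k == i then app g' (fun j => x (i + j))
                         else x (k + n.-1))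
        = app g' (fun k => if k == 0 then app g' x else x (k + n.-1))) /\
      (
      forall (x : 'I_n -> R) (s : 'I_n -> 'I_n), bijective s -> g' x = g' (fun i => x (s i))) /\
      (
      forall (x a : nat -> R) i, i < n ->
        seteq (fun z => exists y, app f' a y /\ z = app g' (set_at x i y))
              (app f' (fun k => app g' (set_at x i (a k))))) /\
      (
      forall (x : nat -> R) i, i < n -> app g' (set_at x i zero) = zero) /\
      (
      forall x, app g' (scons x (fun _ => one)) = x).

Definition hyperideal (I : R -> Prop) : Prop :=
  [/\ exists x, I x,
      subhypergroup f' I
    & forall (x : nat -> R) i y, i < n -> I y -> I (app g' (set_at x i y))].

Section Module.
Variables (M : Type) (f : ('I_m -> M) -> M -> Prop) (g : ('I_n.-1 -> R) -> M -> M -> Prop)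
          (zeroM : M).

Definition appg (r : nat -> R) (x : M) : M -> Prop := g (fun j : 'I_n.-1 => r j) x.

Definition gset (r : nat -> R) (B : M -> Prop) : M -> Prop :=
  fun z => exists x, B x /\ appg r x z.

Definition gsetS (A : nat -> R -> Prop) (B : M -> Prop) : M -> Prop :=
  fun z => exists (r : nat -> R) x, (forall k, k < n.-1 -> A k (r k)) /\ B x /\ appg r x z.

Definition hypermodule : Prop :=
  chg_on f (fun _ => True) zeroM /\
      (forall r x, exists z, g r x z) /\
      (forall (r : nat -> R) (x : nat -> M),
        seteq (gset r (app f x)) (hopS f (fun k => appg r (x k)))) /\
      (forall (r s : nat -> R) i x, i < n.-1 ->
        seteq (fun z => exists y, app f' s y /\ appg (set_at r i y) x z)
              (hopS f (fun k => appg (set_at r i (s k)) x))) /\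
      (forall (r : nat -> R) x i, i < n.-1 ->
        seteq (appg (fun k => if k < i then r k
                              else if k == i then app g' (fun j => r (i + j))
                              else r (k + n.-1)) x)
              (gset r (appg (fun j => r (n.-1 + j)) x))) /\
      (forall (r : nat -> R) x i, i < n.-1 -> seteq (appg (set_at r i zero) x) (eq zeroM)) /\
      (forall a, seteq (appg (fun _ => one) a) (eq a)).

Definition subhypermodule (N : M -> Prop) : Prop :=
  [/\ exists x, N x,
      subhypergroup f N
    & forall (r : nat -> R) x z, N x -> appg r x z -> N z].

Definition hproper (N : M -> Prop) : Prop := exists x, ~ N x.

Definition classical_prime (Q : M -> Prop) : Prop :=
  [/\ subhypermodule Q, hproper Q &
      forall (r : nat -> R) (a : M), subset (appg r a) Q ->
        exists i, i < n.-1 /\ subset (appg (scons (r i) (fun _ => one)) a) Q].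

(* f(N1, g(A_0,...,A_{n-2}, N2), 0^{(m-2)}) *)
Definition fNgN (N1 : M -> Prop) (A : nat -> R -> Prop) (N2 : M -> Prop) : M -> Prop :=
  hopS f (scons N1 (scons (gsetS A N2) (fun _ => eq zeroM))).

Definition S_condition (S : M -> Prop) : Prop :=
  forall I : nat -> R -> Prop, (forall i, i < n.-1 -> hyperideal (I i)) ->
  forall N1 N2, subhypermodule N1 -> subhypermodule N2 ->
    (forall i, i < n.-1 -> meets (fNgN N1 (scons (I i) (fun _ => eq one)) N2) S) ->
    meets (fNgN N1 I N2) S.

Definition maximal_disjoint (Q S : M -> Prop) : Prop :=
  [/\ subhypermodule Q, ~ meets Q S &
      forall Q', subhypermodule Q' -> subset Q Q' -> ~ meets Q' S -> seteq Q' Q].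

End Module.
End Krasner.

(* Main.v *)
From Stdlib Require Import FunctionalExtensionality Classical IndefiniteDescription.
Require Import Defs.
From mathcomp Require Import all_boot zify.
Set Implicit Arguments.
Unset Strict Implicit.
Unset Printing Implicit Defensive.

Ltac ifs := repeat (case: ifP => /=); intros; try lia; try done.

Lemma app_ext (T U : Type) (m : nat) (op : ('I_m -> T) -> U) (x y : nat -> T) :
  (forall k, k < m -> x k = y k) -> app op x = app op y.
Proof.
move=> H; rewrite /app; congr op; apply: functional_extensionality => i.
exact: H (ltn_ord i).
Qed.

Definition sw (i j k : nat) : nat := if k == i then j else if k == j then i else k.

Lemma sw_lt m i j k : i < m -> j < m -> k < m -> sw i j k < m.
Proof. by rewrite /sw => Hi Hj Hk; case: ifP => _ //; case: ifP. Qed.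

Lemma swK i j k : sw i j (sw i j k) = k.
Proof.
rewrite /sw; case: (eqVneq k i) => [->|Hki].
  case: (eqVneq j i) => [->|Hji] //; by rewrite eqxx.
case: (eqVneq k j) => [->|Hkj].
  by rewrite eqxx.
by rewrite (negbTE Hki) (negbTE Hkj).
Qed.

Lemma perm_ord m i j : i < m -> j < m ->
  exists s : 'I_m -> 'I_m, bijective s /\ forall t, nat_of_ord (s t) = sw i j t.
Proof.
move=> Hi Hj.
exists (fun t => Ordinal (sw_lt Hi Hj (ltn_ord t))); split => //.
exists (fun t => Ordinal (sw_lt Hi Hj (ltn_ord t))) => t; apply: val_inj => /=; exact: swK.
Qed.

Lemma comm_eq (T U : Type) m (op : ('I_m -> T) -> U) i j (x : nat -> T) :
  (forall (x : 'I_m -> T) (s : 'I_m -> 'I_m), bijective s -> op x = op (fun i => x (s i))) ->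
  i < m -> j < m -> app op x = app op (fun k => x (sw i j k)).
Proof.
move=> Hc Hi Hj; have [s [bs Hs]] := perm_ord Hi Hj.
rewrite /app (Hc _ s bs); congr op; apply: functional_extensionality => t.
by rewrite Hs.
Qed.

Lemma comm_iff (T : Type) m (op : ('I_m -> T) -> T -> Prop) i j (x : nat -> T) z :
  (forall (x : 'I_m -> T), (forall i : 'I_m, (fun _ : T => True) (x i)) ->
        forall s : 'I_m -> 'I_m, bijective s -> seteq (op x) (op (fun i => x (s i)))) ->
  i < m -> j < m -> app op x z <-> app op (fun k => x (sw i j k)) z.
Proof.
move=> Hc Hi Hj; have [s [bs Hs]] := perm_ord Hi Hj.
rewrite /app (Hc _ (fun _ => I) s bs).
have -> : (fun i0 : 'I_m => x (s i0)) = (fun t : 'I_m => x (sw i j t)).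
  by apply: functional_extensionality => t; rewrite Hs.
by [].
Qed.


Lemma nestE T m (f : ('I_m -> T) -> T -> Prop) (y : nat -> T) i z : i < m ->
  nest f y i z <-> exists w, app f (fun j => y (i + j)) w /\
     app f (fun k => if k < i then y k else if k == i then w else y (k + m.-1)) z.
Proof.
move=> Hi; rewrite /nest /hopS; split.
- case=> x [Hx Hf]; exists (x i); split.
    by have := Hx i Hi; rewrite ltnn eqxx.
  rewrite -(@app_ext _ _ _ f x) // => k Hk; have := Hx k Hk.
  case: ifP => _; first by [].
  case: eqP => [->|_] //.
- case=> w [Hw Hz]; eexists; split; last exact: Hz.
  move=> k Hk /=; case: ifP => _ //; case: eqP => //.
Qed.



Lemma sub_chg T m (f : ('I_m -> T) -> T -> Prop) (e : T) (P : T -> Prop) :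
  1 < m -> chg_on f (fun _ => True) e -> P e ->
  (forall x, P x -> exists y, P y /\ app f (scons x (scons y (fun _ => e))) e) ->
  chg_on f P e.
Proof.
move=> Hm [H1 [H2 [[_ [H3b H3c]] [H4 [H5 H6]]]]] Pe Hinv.
split; first by move=> x _; exact: H1.
split; first by move=> x _; exact: H2.
split.
  split=> //; split; first by move=> x _; exact: H3b.
  move=> e' Pe' Hid; apply: H3c => // x _ z.
  pose Y := fun k => if k == 0 then x else if k < m then e else e'.
  have A := H2 Y (fun _ _ => I) m.-1 (ltac:(lia)).
  have Hm0 : 0 < m by lia.
  have Hm1 : m.-1 < m by lia.
  split.
  - move=> Hz.
    have : nest f Y 0 z.
      apply/nestE => //; exists x; split.
        rewrite (@app_ext _ _ _ f _ (scons x (fun _ => e))); first exact/H3b.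
        by move=> [|k] Hk //=; rewrite /Y /=; ifs.
      rewrite (@app_ext _ _ _ f _ (scons x (fun _ => e'))) //.
      by move=> [|k] Hk //=; rewrite /Y /=; ifs.
    move/A/nestE => /(_ Hm1) [w [Hw Hz']].
    have Ew : e = w.
      apply/(Hid e Pe); rewrite (@app_ext _ _ _ f _ (fun j => Y (m.-1 + j))) //.
      by move=> [|k] Hk //=; rewrite /Y /=; ifs.
    subst w; apply/H3b => //; rewrite (@app_ext _ _ _ f _ (fun k => if k < m.-1 then Y k else if k == m.-1 then e else Y (k + m.-1))) //.
    by move=> [|k] Hk //=; rewrite /Y /=; ifs.
  - move=> <-.
    have : nest f Y m.-1 x.
      apply/nestE => //; exists e; split.
        rewrite (@app_ext _ _ _ f _ (scons e (fun _ => e'))); first exact/Hid.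
        by move=> [|k] Hk //=; rewrite /Y /=; ifs.
      rewrite (@app_ext _ _ _ f _ (scons x (fun _ => e))); first exact/H3b.
      by move=> [|k] Hk //=; rewrite /Y /=; ifs.
    move/A/nestE => /(_ Hm0) [w [Hw Hz']].
    have Ew : x = w.
      apply/H3b => //; rewrite (@app_ext _ _ _ f _ (fun j => Y (0 + j))) //.
      by move=> [|k] Hk //=; rewrite /Y /=; ifs.
    subst w; rewrite (@app_ext _ _ _ f _ (fun k => if k < 0 then Y k else if k == 0 then x else Y (k + m.-1))) //.
    by move=> [|k] Hk //=; rewrite /Y /=; ifs.
split.
  move=> x Px; have [y [Py Hy]] := Hinv x Px.
  exists y; split => // y' [Py' Hy'].
  have [y0 [_ U]] := H4 x I.
  by rewrite -(U y (conj I Hy)) -(U y' (conj I Hy')).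
split.
  move=> x xs inv _ Hk Hx i Hi; apply: (H5 x xs inv I) => // k Hkm.
  by case: (Hk k Hkm) => _ _ ?; split.
by move=> x _; exact: H6.
Qed.



Definition oplus T m (f : ('I_m -> T) -> T -> Prop) (e x y : T) : T -> Prop :=
  app f (scons x (scons y (fun _ => e))).

Lemma oplus_e T m (f : ('I_m -> T) -> T -> Prop) e x z :
  chg_on f (fun _ => True) e -> oplus f e x e z <-> x = z.
Proof.
move=> [_ [_ [[_ [H3 _]] _]]]; rewrite /oplus -(H3 x I).
by rewrite (@app_ext _ _ _ f _ (scons x (fun _ => e))) // => [[|[|k]]].
Qed.

Lemma oplus_C T m (f : ('I_m -> T) -> T -> Prop) e x y z : 1 < m ->
  chg_on f (fun _ => True) e -> oplus f e x y z <-> oplus f e y x z.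
Proof.
move=> Hm [_ [_ [_ [_ [_ H6]]]]]; rewrite /oplus.
rewrite (@comm_iff _ _ f 0 1 _ z H6) //; last lia.
rewrite (@app_ext _ _ _ f _ (scons y (scons x (fun _ => e)))) //.
by move=> [|[|k]] Hk.
Qed.

Lemma oplus_A T m (f : ('I_m -> T) -> T -> Prop) e x y w z : 1 < m ->
  chg_on f (fun _ => True) e ->
  (exists u, oplus f e x y u /\ oplus f e u w z) <->
  (exists v, oplus f e y w v /\ oplus f e x v z).
Proof.
move=> Hm Hc; have Hc' := Hc; move: Hc' => [_ [H2 [_ [_ [_ H6]]]]].
pose Y := fun k => if k == 0 then x else if k == 1 then y else if k == m then w else e.
have A := H2 Y (fun _ _ => I) 1 Hm.
have E0 : forall z, nest f Y 0 z <-> exists u, oplus f e x y u /\ oplus f e u w z.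
  move=> z0; rewrite nestE; last lia.
  split=> [[u [Hu Hz]]|[u [Hu Hz]]]; exists u; split.
  - move: Hu; rewrite /oplus (@app_ext _ _ _ f _ (fun j => Y (0 + j))) //.
    by move=> [|[|k]] Hk //=; rewrite /Y; ifs.
  - move: Hz; rewrite /oplus (@app_ext _ _ _ f _ (fun k => if k < 0 then Y k else if k == 0 then u else Y (k + m.-1))) //.
    by move=> [|[|k]] Hk //=; rewrite /Y; ifs.
  - move: Hu; rewrite /oplus (@app_ext _ _ _ f _ (fun j => Y (0 + j))) //.
    by move=> [|[|k]] Hk //=; rewrite /Y; ifs.
  - move: Hz; rewrite /oplus (@app_ext _ _ _ f _ (fun k => if k < 0 then Y k else if k == 0 then u else Y (k + m.-1))) //.
    by move=> [|[|k]] Hk //=; rewrite /Y; ifs.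
have E1 : forall z, nest f Y 1 z <-> exists v, oplus f e y w v /\ oplus f e x v z.
  move=> z0; rewrite nestE //.
  have Ei : forall v, app f (fun j => Y (1 + j)) v <-> oplus f e y w v.
    move=> v; rewrite (@comm_iff _ _ f 1 m.-1 _ v H6) //; last lia.
    rewrite /oplus (@app_ext _ _ _ f _ (scons y (scons w (fun _ => e)))) //.
    by move=> [|[|k]] Hk //=; rewrite /Y /sw; ifs.
  split=> [[u [Hu Hz]]|[u [Hu Hz]]]; exists u; split.
  - by apply/Ei.
  - move: Hz; rewrite /oplus (@app_ext _ _ _ f _ (scons x (scons u (fun _ => e)))) //.
    by move=> [|[|k]] Hk //=; rewrite /Y; ifs.
  - by apply/Ei.
  - move: Hz; rewrite /oplus (@app_ext _ _ _ f _ (fun k => if k < 1 then Y k else if k == 1 then u else Y (k + m.-1))) //.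
    by move=> [|[|k]] Hk //=; rewrite /Y; ifs.
split => H.
- by apply/E1/A/E0.
- by apply/E0/A/E1.
Qed.

Lemma oplus_closed T m (f : ('I_m -> T) -> T -> Prop) e (P : T -> Prop) : 1 < m ->
  chg_on f (fun _ => True) e -> P e ->
  (forall x y z, P x -> P y -> oplus f e x y z -> P z) ->
  forall xs : nat -> T, (forall k, k < m -> P (xs k)) -> forall z, app f xs z -> P z.
Proof.
move=> Hm Hc Pe HP xs Hxs.
have Hc' := Hc; move: Hc' => [_ [H2 [[_ [H3 _]] _]]].
pose F j := fun p => if p + j < m then xs (p + j) else e.
suff K : forall d j, j + d = m -> forall z, app f (F j) z -> P z.
  move=> z Hz; apply: (K m 0) => //.
  by rewrite (@app_ext _ _ _ f _ xs) // => k Hk; rewrite /F addn0 Hk.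
elim=> [|d IH] j Hj z Hz.
  have : e = z.
    apply/(H3 e I); rewrite (@app_ext _ _ _ f _ (F j)) // => [[|k]] Hk /=; rewrite /F; ifs.
  by move=> <-.
have A := H2 (F j) (fun _ _ => I) 1 Hm.
have : nest f (F j) 0 z.
  apply/nestE; first lia.
  exists z; split.
    by rewrite (@app_ext _ _ _ f _ (F j)).
  rewrite (@app_ext _ _ _ f _ (scons z (fun _ => e))); first exact/(H3 z I z).
  move=> [|k] Hk /=; rewrite /F; ifs.
move/A/nestE => /(_ Hm) [w [Hw Hz']].
have Pw : P w.
  apply: (IH j.+1); first lia.
  rewrite (@app_ext _ _ _ f _ (fun j0 => F j (1 + j0))) // => k Hk; rewrite /F.
  by rewrite addSn addnS.
apply: (HP (xs j) w) => //; first (apply: Hxs; lia).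
rewrite /oplus (@app_ext _ _ _ f _ (fun k => if k < 1 then F j k else if k == 1 then w else F j (k + m.-1))) //.
move=> [|[|k]] Hk /=; rewrite /F; ifs.
Qed.

Lemma oplus_4 T m (f : ('I_m -> T) -> T -> Prop) e q1 t1 z1 q2 t2 z2 z : 1 < m ->
  chg_on f (fun _ => True) e ->
  oplus f e q1 t1 z1 -> oplus f e q2 t2 z2 -> oplus f e z1 z2 z ->
  exists q t, oplus f e q1 q2 q /\ oplus f e t1 t2 t /\ oplus f e q t z.
Proof.
move=> Hm Hc H1 H2 H.
have [v [Hv Hz]] := proj1 (@oplus_A _ _ f e q1 t1 z2 z Hm Hc) (ex_intro _ z1 (conj H1 H)).
move/(@oplus_C _ _ f e t1 z2 v Hm Hc): Hv => Hv.
have [v' [Hv' Hv2]] := proj1 (@oplus_A _ _ f e q2 t2 t1 v Hm Hc) (ex_intro _ z2 (conj H2 Hv)).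
have [u [Hu Hz2]] := proj2 (@oplus_A _ _ f e q1 q2 v' z Hm Hc) (ex_intro _ v (conj Hv2 Hz)).
exists u, v'; split => //; split => //.
by apply/(@oplus_C _ _ f e t1 t2 v' Hm Hc).
Qed.



Definition mul R n (g' : ('I_n -> R) -> R) (one x y : R) : R :=
  app g' (scons x (scons y (fun _ => one))).


Lemma mul_1 R m n (f' : ('I_m -> R) -> R -> Prop) (g' : ('I_n -> R) -> R) zero one x :
  krasner_hyperring f' g' zero one -> mul g' one x one = x.
Proof.
move=> [_ [_ [_ [_ [_ K6]]]]]; rewrite /mul -{2}(K6 x).
by apply: app_ext => [[|[|k]]].
Qed.

Lemma g_one R m n (f' : ('I_m -> R) -> R -> Prop) (g' : ('I_n -> R) -> R) zero one :
  krasner_hyperring f' g' zero one -> app g' (fun _ => one) = one.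
Proof.
move=> [_ [_ [_ [_ [_ K6]]]]]; rewrite -{2}(K6 one).
by apply: app_ext => [[|k]].
Qed.

Lemma mulC R m n (f' : ('I_m -> R) -> R -> Prop) (g' : ('I_n -> R) -> R) zero one x y : 1 < n ->
  krasner_hyperring f' g' zero one -> mul g' one x y = mul g' one y x.
Proof.
move=> Hn [_ [_ [K3 _]]]; rewrite /mul (@comm_eq _ _ _ g' 0 1) //; last lia.
by apply: app_ext => [[|[|k]]].
Qed.

Lemma gexp R m n (f' : ('I_m -> R) -> R -> Prop) (g' : ('I_n -> R) -> R) zero one (x : nat -> R) : 1 < n ->
  krasner_hyperring f' g' zero one ->
  app g' x = mul g' one (x 0) (app g' (fun k => if k < n.-1 then x k.+1 else one)).
Proof.
move=> Hn Kr; have Kr' := Kr; move: Kr' => [_ [K2 [_ [_ [_ K6]]]]].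
pose y p := if p < n then x p else one.
have := K2 y 1 Hn.
have -> : app g' (fun k => if k == 0 then app g' y else y (k + n.-1)) = app g' x.
  rewrite -(K6 (app g' x)); apply: app_ext => [[|k]] Hk /=.
    by apply: app_ext => j Hj; rewrite /y Hj.
  rewrite /y; ifs.
move=> <-; rewrite /mul; apply: app_ext => [[|[|k]]] Hk /=.
- rewrite /y; ifs.
- apply: app_ext => j Hj; rewrite /y; ifs.
- rewrite /y; ifs.
Qed.

Lemma mulA R m n (f' : ('I_m -> R) -> R -> Prop) (g' : ('I_n -> R) -> R) zero one x y z : 2 < n ->
  krasner_hyperring f' g' zero one ->
  mul g' one (mul g' one x y) z = mul g' one x (mul g' one y z).
Proof.
move=> Hn Kr; have Hn1 : 1 < n by lia.
have Kr' := Kr; move: Kr' => [_ [_ [K3 _]]].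
have E : forall a b c, app g' (scons a (scons b (scons c (fun _ => one)))) = mul g' one a (mul g' one b c).
  move=> a b c; rewrite (gexp _ Hn1 Kr) /=; congr mul.
  by apply: app_ext => [[|[|k]]] Hk /=; ifs.
have := E x y z; rewrite (@comm_eq _ _ _ g' 0 2) //; last lia.
have -> : app g' (fun k => scons x (scons y (scons z (fun=> one))) (sw 0 2 k)) =
          app g' (scons z (scons y (scons x (fun _ => one)))).
  by apply: app_ext => [[|[|[|k]]]].
rewrite E => <-.
by rewrite (mulC _ _ Hn1 Kr) [mul g' one y x](mulC _ _ Hn1 Kr).
Qed.

Lemma g_lin R m n (f' : ('I_m -> R) -> R -> Prop) (g' : ('I_n -> R) -> R) zero one (x : nat -> R) i :
  1 < n -> i < n -> krasner_hyperring f' g' zero one ->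
  exists T, forall v, app g' (set_at x i v) = mul g' one v T.
Proof.
move=> Hn Hi Kr; have Kr' := Kr; move: Kr' => [_ [_ [K3 _]]].
exists (app g' (fun k => if k < n.-1 then set_at x i one (sw 0 i k.+1) else one)) => v.
rewrite (@comm_eq _ _ _ g' 0 i) //; last lia.
rewrite (gexp _ Hn Kr); congr mul.
  by rewrite /set_at /sw eqxx; ifs.
apply: app_ext => k Hk; case: ifP => // _.
rewrite /set_at /sw; ifs.
Qed.

Lemma g_set_mul R m n (f' : ('I_m -> R) -> R -> Prop) (g' : ('I_n -> R) -> R) zero one (x : nat -> R) i a b :
  2 < n -> i < n -> krasner_hyperring f' g' zero one ->
  app g' (set_at x i (mul g' one a b)) = mul g' one a (app g' (set_at x i b)).
Proof.
move=> Hn Hi Kr; have Hn1 : 1 < n by lia.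
have [T HT] := g_lin x Hn1 Hi Kr.
by rewrite !HT (mulA _ _ _ Hn Kr).
Qed.

Lemma mul_0 R m n (f' : ('I_m -> R) -> R -> Prop) (g' : ('I_n -> R) -> R) zero one x :
  1 < n -> krasner_hyperring f' g' zero one -> mul g' one x zero = zero.
Proof.
move=> Hn [_ [_ [_ [_ [K5 _]]]]]; rewrite -{2}(K5 (scons x (fun _ => one)) 1 Hn) /mul.
by apply: app_ext => [[|[|k]]].
Qed.

Lemma mul1 R m n (f' : ('I_m -> R) -> R -> Prop) (g' : ('I_n -> R) -> R) zero one x :
  1 < n -> krasner_hyperring f' g' zero one -> mul g' one one x = x.
Proof. by move=> Hn Kr; rewrite (mulC _ _ Hn Kr) (mul_1 _ Kr). Qed.

Definition gprod R n (g' : ('I_n -> R) -> R) (one : R) (s : nat -> R) : R :=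
  app g' (fun k => if k < n.-1 then s k else one).

Lemma gprod_mul R m n (f' : ('I_m -> R) -> R -> Prop) (g' : ('I_n -> R) -> R) zero one (r s : nat -> R) :
  2 < n -> krasner_hyperring f' g' zero one ->
  (forall k, k < n.-1 -> exists t, s k = mul g' one (r k) t) ->
  exists T, gprod g' one s = mul g' one (gprod g' one r) T.
Proof.
move=> Hn Kr Hs; have Hn1 : 1 < n by lia.
suff K : forall k, k <= n.-1 -> exists T,
  app g' (fun j => if j < k then s j else one) =
  mul g' one (app g' (fun j => if j < k then r j else one)) T.
  have [T HT] := K n.-1 (leqnn _); exists T; rewrite /gprod.
  exact: HT.
elim=> [|k IH] Hk.
  exists one; rewrite (mul_1 _ Kr).
  by apply: app_ext.
have [T HT] := IH (ltnW Hk).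
have [t Ht] := Hs k Hk.
have Es : (fun j => if j < k.+1 then s j else one) = set_at (fun j => if j < k then s j else one) k (mul g' one (r k) t).
  apply: functional_extensionality => j; rewrite /set_at.
  case: (eqVneq j k) => [->|Hjk]; first by rewrite ltnSn Ht.
  by rewrite ltnS leq_eqVlt (negbTE Hjk).
have Er : (fun j => if j < k.+1 then r j else one) = set_at (fun j => if j < k then r j else one) k (mul g' one (r k) one).
  apply: functional_extensionality => j; rewrite /set_at (mul_1 _ Kr).
  case: (eqVneq j k) => [->|Hjk]; first by rewrite ltnSn.
  by rewrite ltnS leq_eqVlt (negbTE Hjk).
have Hkn : k < n by lia.
rewrite Es Er !(g_set_mul _ _ _ Hn Hkn Kr).
have Ek : forall (u : nat -> R), set_at (fun j => if j < k then u j else one) k one = (fun j => if j < k then u j else one).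
  move=> u; apply: functional_extensionality => j; rewrite /set_at.
  by case: (eqVneq j k) => [->|_]; rewrite ?ltnn.
have Et : app g' (set_at (fun j => if j < k then s j else one) k t) =
          mul g' one t (app g' (set_at (fun j => if j < k then s j else one) k one)).
  by rewrite -(g_set_mul _ _ _ Hn Hkn Kr) (mul_1 _ Kr).
rewrite Et !Ek HT.
exists (mul g' one t T).
rewrite -!(mulA _ _ _ Hn Kr); congr mul.
by rewrite (mulA _ _ _ Hn Kr) [mul g' one t _](mulC _ _ Hn1 Kr) -(mulA _ _ _ Hn Kr).
Qed.



Definition Act R n M (g : ('I_n.-1 -> R) -> M -> M -> Prop) (one c : R) (x : M) : M -> Prop :=
  appg g (scons c (fun _ => one)) x.

Lemma appg_ext R n M (g : ('I_n.-1 -> R) -> M -> M -> Prop) (r r' : nat -> R) x :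
  (forall k, k < n.-1 -> r k = r' k) -> appg g r x = appg g r' x.
Proof.
move=> H; rewrite /appg; congr g; apply: functional_extensionality => i.
exact: H (ltn_ord i).
Qed.


Lemma appg_ext2 R n M (g : ('I_n.-1 -> R) -> M -> M -> Prop) (r r' : nat -> R) :
  (forall k, k < n.-1 -> r k = r' k) -> appg g r = appg g r'.
Proof.
move=> H; apply: functional_extensionality => x; exact: appg_ext.
Qed.

Lemma act_1 R m n M (f' : ('I_m -> R) -> R -> Prop) (g' : ('I_n -> R) -> R) zero one
  (f : ('I_m -> M) -> M -> Prop) (g : ('I_n.-1 -> R) -> M -> M -> Prop) zeroM x z :
  hypermodule f' g' zero one f g zeroM -> Act g one one x z <-> x = z.
Proof.
move=> [_ [_ [_ [_ [_ [_ H7]]]]]]; rewrite /Act -(H7 x z).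
by rewrite (@appg_ext _ _ _ g _ (fun _ => one)) // => [[|k]].
Qed.

Lemma act_0 R m n M (f' : ('I_m -> R) -> R -> Prop) (g' : ('I_n -> R) -> R) zero one
  (f : ('I_m -> M) -> M -> Prop) (g : ('I_n.-1 -> R) -> M -> M -> Prop) zeroM x z :
  1 < n -> hypermodule f' g' zero one f g zeroM -> Act g one zero x z <-> zeroM = z.
Proof.
move=> Hn [_ [_ [_ [_ [_ [H6 _]]]]]]; rewrite /Act -(H6 (fun _ => one) x 0 ltac:(lia) z).
by rewrite (@appg_ext _ _ _ g _ (set_at (fun _ => one) 0 zero)) // => [[|k]].
Qed.

Lemma gnorm R m n M (f' : ('I_m -> R) -> R -> Prop) (g' : ('I_n -> R) -> R) zero one
  (f : ('I_m -> M) -> M -> Prop) (g : ('I_n.-1 -> R) -> M -> M -> Prop) zeroM s x z :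
  1 < n -> hypermodule f' g' zero one f g zeroM ->
  appg g s x z <-> Act g one (gprod g' one s) x z.
Proof.
move=> Hn Hm; have Hm' := Hm; move: Hm' => [_ [_ [_ [_ [H5 [_ H7]]]]]].
pose r := fun k => if k < n.-1 then s k else one.
have := H5 r x 0 ltac:(lia) z.
rewrite (@appg_ext _ _ _ g _ (scons (gprod g' one s) (fun _ => one))); last first.
  move=> [|k] Hk /=; first by apply: app_ext.
  rewrite /r; ifs.
rewrite /Act => ->; rewrite /gset; split.
- move=> Hz; exists x; split.
    by rewrite (@appg_ext _ _ _ g _ (fun _ => one)); [exact/H7| move=> k Hk; rewrite /r; ifs].
  by rewrite (@appg_ext _ _ _ g _ s) // => k Hk; rewrite /r Hk.
- move=> [w [Hw Hz]].
  move: Hw; rewrite (@appg_ext _ _ _ g _ (fun _ => one)); last by move=> k Hk; rewrite /r; ifs.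
  move/H7 => Ex; subst w.
  by move: Hz; rewrite (@appg_ext _ _ _ g _ s) // => k Hk; rewrite /r Hk.
Qed.

Lemma act_comp R m n M (f' : ('I_m -> R) -> R -> Prop) (g' : ('I_n -> R) -> R) zero one
  (f : ('I_m -> M) -> M -> Prop) (g : ('I_n.-1 -> R) -> M -> M -> Prop) zeroM c d x z :
  1 < n -> krasner_hyperring f' g' zero one -> hypermodule f' g' zero one f g zeroM ->
  (exists w, Act g one d x w /\ Act g one c w z) <-> Act g one (mul g' one c d) x z.
Proof.
move=> Hn Kr Hm; have Hm' := Hm; move: Hm' => [_ [_ [_ [_ [H5 [_ H7]]]]]].
have Kr' := Kr; move: Kr' => [_ [_ [K3 _]]].
pose r := fun k => if k == 0 then c else if k == n.-1 then d else one.
have := H5 r x 0 ltac:(lia) z.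
rewrite (@appg_ext _ _ _ g _ (scons (mul g' one c d) (fun _ => one))); last first.
  move=> [|k] Hk /=.
    rewrite /mul (@comm_eq _ _ _ g' 1 n.-1) //; try lia.
    by apply: app_ext => [[|[|j]]] Hj; rewrite /r /sw; ifs.
  rewrite /r; ifs.
rewrite /Act => ->; rewrite /gset.
rewrite (@appg_ext _ _ _ g (fun j => r (n.-1 + j)) (scons d (fun _ => one))); last first.
  move=> [|k] Hk /=; rewrite /r; ifs.
rewrite (@appg_ext2 _ _ _ g r (scons c (fun _ => one))); last first.
  move=> [|k] Hk /=; rewrite /r; ifs.
by split=> [[w [H1 H2]]|[w [H1 H2]]]; exists w.
Qed.

Lemma act_swap R m n M (f' : ('I_m -> R) -> R -> Prop) (g' : ('I_n -> R) -> R) zero one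
  (f : ('I_m -> M) -> M -> Prop) (g : ('I_n.-1 -> R) -> M -> M -> Prop) zeroM c d x z :
  1 < n -> krasner_hyperring f' g' zero one -> hypermodule f' g' zero one f g zeroM ->
  (exists w, Act g one d x w /\ Act g one c w z) -> (exists w, Act g one c x w /\ Act g one d w z).
Proof.
move=> Hn Kr Hm /(act_comp _ _ _ _ Hn Kr Hm) H.
by apply/(act_comp _ _ _ _ Hn Kr Hm); rewrite (mulC _ _ Hn Kr).
Qed.

Lemma act_x0 R m n M (f' : ('I_m -> R) -> R -> Prop) (g' : ('I_n -> R) -> R) zero one
  (f : ('I_m -> M) -> M -> Prop) (g : ('I_n.-1 -> R) -> M -> M -> Prop) zeroM c z :
  1 < n -> krasner_hyperring f' g' zero one -> hypermodule f' g' zero one f g zeroM ->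
  Act g one c zeroM z <-> zeroM = z.
Proof.
move=> Hn Kr Hm; split.
- move=> Hz; apply/(act_0 zeroM z Hn Hm).
  rewrite -(mul_0 c Hn Kr); apply/(act_comp _ _ _ _ Hn Kr Hm).
  by exists zeroM; split => //; apply/(act_0 _ _ Hn Hm).
- move=> <-.
  have : Act g one (mul g' one c zero) zeroM zeroM.
    by rewrite (mul_0 c Hn Kr); apply/(act_0 _ _ Hn Hm).
  move/(act_comp _ _ _ _ Hn Kr Hm) => [w [Hw Hz]].
  by move/(act_0 _ _ Hn Hm): Hw => Ew; subst w.
Qed.

Lemma g_zero R m n M (f' : ('I_m -> R) -> R -> Prop) (g' : ('I_n -> R) -> R) zero one
  (f : ('I_m -> M) -> M -> Prop) (g : ('I_n.-1 -> R) -> M -> M -> Prop) zeroM s z :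
  1 < n -> krasner_hyperring f' g' zero one -> hypermodule f' g' zero one f g zeroM ->
  appg g s zeroM z <-> zeroM = z.
Proof.
move=> Hn Kr Hm; rewrite (gnorm _ _ _ Hn Hm); exact: (act_x0 _ _ Hn Kr Hm).
Qed.

Lemma ord_seq T m (x : 'I_m -> T) : 0 < m -> exists xs : nat -> T, (fun i : 'I_m => xs i) = x.
Proof.
case: m x => // m x _; exists (fun k => x (inord k)).
by apply: functional_extensionality => i; rewrite inord_val.
Qed.

Lemma submod R m n M (f' : ('I_m -> R) -> R -> Prop) (g' : ('I_n -> R) -> R) zero one
  (f : ('I_m -> M) -> M -> Prop) (g : ('I_n.-1 -> R) -> M -> M -> Prop) zeroM (P : M -> Prop) :
  1 < m -> 1 < n -> krasner_hyperring f' g' zero one -> hypermodule f' g' zero one f g zeroM ->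
  P zeroM ->
  (forall xs : nat -> M, (forall k, k < m -> P (xs k)) -> forall z, app f xs z -> P z) ->
  (forall r x z, P x -> appg g r x z -> P z) ->
  subhypermodule f g P.
Proof.
move=> Hm1 Hn Kr Hm P0 Pf Pg.
have Kr' := Kr; move: Kr' => [[_ [_ [_ [K4 _]]]] _].
have Hm' := Hm; move: Hm' => [H1 [_ [_ [H4 _]]]].
split; first by exists zeroM.
  split.
    move=> x Hx z Hz; have [xs Exs] := ord_seq x ltac:(lia).
    apply: (Pf xs) => [k Hk|].
      by have := Hx (Ordinal Hk); rewrite -Exs.
    by rewrite /app Exs.
  exists zeroM; apply: sub_chg => // x Px.
  have [m1 [[_ Hm1'] _]] := K4 one I.
  pose s := scons one (scons m1 (fun _ => zero)).
  have Hh : hopS f (fun k => appg g (set_at (fun _ => one) 0 (s k)) x) zeroM.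
    apply/(H4 (fun _ => one) s 0 x ltac:(lia) zeroM).
    exists zero; split => //.
    rewrite (@appg_ext _ _ _ g _ (scons zero (fun _ => one))); first exact/(act_0 _ _ Hn Hm).
    by move=> [|k].
  case: Hh => w [Hw Hwz].
  have Ew : forall k, k < m -> Act g one (s k) x (w k).
    move=> k Hk; have := Hw k Hk; rewrite /Act.
    by rewrite (@appg_ext _ _ _ g _ (scons (s k) (fun _ => one))) // => [[|j]].
  exists (w 1); split.
    apply: (Pg _ x) => //; exact: (Ew 1 Hm1).
  rewrite (@app_ext _ _ _ f _ w) // => [[|[|k]]] Hk //=.
  - by apply/(act_1 _ _ Hm); exact: (Ew 0 Hk).
  - by apply/(act_0 _ _ Hn Hm); exact: (Ew _ Hk).
exact: Pg.
Qed.



Lemma mul_set R m n (f' : ('I_m -> R) -> R -> Prop) (g' : ('I_n -> R) -> R) zero one c v :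
  krasner_hyperring f' g' zero one ->
  app g' (set_at (scons c (fun _ => one)) 1 v) = mul g' one c v.
Proof. by move=> _; apply: app_ext => [[|[|k]]]. Qed.

Lemma principal R m n (f' : ('I_m -> R) -> R -> Prop) (g' : ('I_n -> R) -> R) zero one c :
  1 < m -> 2 < n -> krasner_hyperring f' g' zero one ->
  hyperideal f' g' (fun s => exists t, s = mul g' one c t).
Proof.
move=> Hm Hn Kr; have Hn1 : 1 < n by lia.
have Kr' := Kr; move: Kr' => [K1 [_ [_ [K4 _]]]].
have K1' := K1; move: K1' => [_ [_ [_ [Kinv _]]]].
split.
- by exists (mul g' one c one), one.
- split.
    move=> x Hx z Hz.
    pose t i := proj1_sig (constructive_indefinite_description _ (Hx i)).
    have Ht : forall i, x i = mul g' one c (t i).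
      move=> i; exact: (proj2_sig (constructive_indefinite_description _ (Hx i))).
    have [ts Ets] := ord_seq t ltac:(lia).
    have := (K4 (scons c (fun _ => one)) ts 1 Hn1 z).2.
    case.
      rewrite /app; have -> : (fun i : 'I_m => app g' (set_at (scons c (fun=> one)) 1 (ts i))) = x.
        apply: functional_extensionality => i.
        by rewrite (mul_set _ _ Kr) Ht -Ets.
      exact: Hz.
    move=> y [_ ->]; exists y; exact: (mul_set _ _ Kr).
  exists zero; apply: sub_chg => //.
    by exists zero; rewrite (mul_0 _ Hn1 Kr).
  move=> x [t ->].
  have [t' [[_ Ht'] _]] := Kinv t I.
  exists (mul g' one c t'); split; first by exists t'.
  have E0 : zero = app g' (set_at (scons c (fun _ => one)) 1 zero).
    by rewrite (mul_set _ _ Kr) (mul_0 _ Hn1 Kr).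
  have H := (K4 (scons c (fun _ => one)) (scons t (scons t' (fun _ => zero))) 1 Hn1 zero).1 (ex_intro _ zero (conj Ht' E0)).
  move: H; rewrite (@app_ext _ _ _ f' _ (fun k => app g' (set_at (scons c (fun=> one)) 1 (scons t (scons t' (fun=> zero)) k)))) //.
  move=> [|[|k]] Hk /=; rewrite (mul_set _ _ Kr) //.
  by rewrite (mul_0 _ Hn1 Kr).
- move=> x i y Hi [t ->].
  by exists (app g' (set_at x i t)); rewrite (g_set_mul _ _ _ Hn Hi Kr).
Qed.



Theorem mainTheorem2 (m n : nat) (R M : Type)
  (f' : ('I_m -> R) -> R -> Prop) (g' : ('I_n -> R) -> R) (zeroR one : R)
  (f : ('I_m -> M) -> M -> Prop) (g : ('I_(n.-1) -> R) -> M -> M -> Prop) (zeroM : M)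
  (Q S : M -> Prop) :
  2 <= m -> 2 <= n ->
  krasner_hyperring f' g' zeroR one ->
  hypermodule f' g' zeroR one f g zeroM ->
  subhypermodule f g Q -> hproper Q ->
  (exists s, S s) -> (forall s, S s -> s <> zeroM) ->
  S_condition f' g' one f g zeroM S ->
  maximal_disjoint f g Q S ->
  classical_prime one f g Q.
Proof.
move=> Hm2 Hn2 Kr Hm QS Qp _ _ Scond Hmax.
have Hm1 : 1 < m by lia.
split => // r a Hra.
case: (leqP n 2) => Hn3.
  exists 0; split; first lia.
  by rewrite (@appg_ext2 _ _ _ g _ r) // => k Hk; have -> : k = 0 by lia.
have Hn1 : 1 < n by lia.
have Hc := Hm; move: Hc => [Hc [_ [H3 _]]].
case: (QS) => [[q0 Qq0] [Qf' _] Qg].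
have Q0 : Q zeroM.
  by apply: (Qg (scons zeroR (fun _ => one)) q0) => //; apply/(act_0 _ _ Hn1 Hm).
have Qf : forall xs : nat -> M, (forall k, k < m -> Q (xs k)) -> forall z, app f xs z -> Q z.
  move=> xs Hxs z Hz; apply: (Qf' (fun i => xs i)) Hz => i; exact: Hxs.
pose W := fun y => Defs.subset (appg g r y) Q.
pose I := fun j s => exists t, s = mul g' one (r j) t.
have W0 : W zeroM by move=> z /(g_zero _ _ Hn1 Kr Hm) <-.
have Wf : forall xs : nat -> M, (forall k, k < m -> W (xs k)) -> forall z, app f xs z -> W z.
  move=> xs Hxs z Hz w Hw.
  have [ws [Hws Hw']] := (H3 r xs w).1 (ex_intro _ z (conj Hz Hw)).
  apply: (Qf ws) Hw' => k Hk; exact: (Hxs k Hk _ (Hws k Hk)).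
have Wg : forall u y z, W y -> appg g u y z -> W z.
  move=> u y z Wy Hz w Hw.
  move/(gnorm _ _ _ Hn1 Hm): Hz => Hz; move/(gnorm _ _ _ Hn1 Hm): Hw => Hw.
  have [v [Hv Hwv]] := act_swap Hn1 Kr Hm (ex_intro _ z (conj Hz Hw)).
  apply: (Qg u v); first by apply: Wy; apply/(gnorm _ _ _ Hn1 Hm).
  by apply/(gnorm _ _ _ Hn1 Hm).
have Wsub : subhypermodule f g W := submod Hm1 Hn1 Kr Hm W0 Wf Wg.
have Iid : forall j, j < n.-1 -> hyperideal f' g' (I j).
  move=> j _; exact: (principal (r j) Hm1 Hn3 Kr).
have Prod : forall z, fNgN f g zeroM Q I W z -> Q z.
  move=> z [xs [Hxs Hz]]; apply: (Qf xs) Hz => [[|[|k]]] Hk.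
  - exact: (Hxs 0 Hk).
  - have [rho [y [Hrho [Wy Hy]]]] := Hxs 1 Hk.
    have [T HT] := gprod_mul Hn3 Kr Hrho.
    move/(gnorm _ _ _ Hn1 Hm): Hy; rewrite HT (mulC _ _ Hn1 Kr).
    move/(act_comp _ _ _ _ Hn1 Kr Hm) => [v [Hv Hv']].
    apply: (Qg _ v) Hv'; apply: Wy; exact/(gnorm _ _ _ Hn1 Hm).
  - by have := Hxs k.+2 Hk => /= <-.
have notX : ~ meets (fNgN f g zeroM Q I W) S.
  case: Hmax => _ HQS _ [z [Hz Sz]]; apply: HQS; exists z; split => //; exact: Prod.
have [i [Hi notXi]] : exists i, i < n.-1 /\ ~ meets (fNgN f g zeroM Q (scons (I i) (fun _ => eq one)) W) S.
  apply: NNPP => H; apply: notX; apply: (Scond I Iid Q W QS Wsub) => i Hi.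
  apply: NNPP => H'; apply: H; exists i; split => //.
exists i; split => //.
pose T := fun z => exists y, W y /\ Act g one (r i) y z.
pose P := fun z => exists q t, Q q /\ T t /\ oplus f zeroM q t z.
have T0 : T zeroM by exists zeroM; split => //; apply/(act_x0 _ _ Hn1 Kr Hm).
have P0 : P zeroM by exists zeroM, zeroM; do 2 split => //; apply/(oplus_e _ _ Hc).
have QP : Defs.subset Q P by move=> q Qq; exists q, zeroM; do 2 split => //; apply/(oplus_e _ _ Hc).
have Psub : subhypermodule f g P.
  apply: (submod Hm1 Hn1 Kr Hm P0) => [xs Hxs z Hz|u x w [q [t [Qq [Tt Hx]]]] Hw].
    apply: (oplus_closed Hm1 Hc P0 _ Hxs Hz).
    move=> x y z' [q1 [t1 [Qq1 [[y1 [Wy1 Ht1]] Hx]]]] [q2 [t2 [Qq2 [[y2 [Wy2 Ht2]] Hy]]]] Hz'.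
    have [q [t [Hq [Ht Hz'']]]] := oplus_4 Hm1 Hc Hx Hy Hz'.
    exists q, t; split; last split => //.
      by apply: (Qf _ _ q Hq) => [[|[|k]]].
    have [ys [Hys Hy']] : exists ys : nat -> M, (forall k, k < m -> appg g (scons (r i) (fun _ => one)) (scons y1 (scons y2 (fun _ => zeroM)) k) (ys k)) /\ app f ys t.
      exists (scons t1 (scons t2 (fun _ => zeroM))); split => // [[|[|k]]] Hk //=.
      by apply/(act_x0 _ _ Hn1 Kr Hm).
    have [y0 [Hy1 Hy2]] := (H3 _ _ t).2 (ex_intro _ ys (conj Hys Hy')).
    exists y0; split => //; apply: (Wf _ _ y0 Hy1) => [[|[|k]]] //.
  have [ws [Hws Hw']] := (H3 u _ w).1 (ex_intro _ x (conj Hx Hw)).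
  exists (ws 0), (ws 1); split; first exact: (Qg u q _ Qq (Hws 0 ltac:(lia))).
  split.
    case: Tt => y [Wy Hty].
    have Hw1 := Hws 1 Hm1; move/(gnorm _ _ _ Hn1 Hm): Hw1 => Hw1.
    have [v [Hv Hv']] := act_swap Hn1 Kr Hm (ex_intro _ t (conj Hty Hw1)).
    exists v; split => //; apply: (Wg u y) => //; exact/(gnorm _ _ _ Hn1 Hm).
  rewrite /oplus (@app_ext _ _ _ f _ ws) // => [[|[|k]]] Hk //=.
  by have := Hws k.+2 Hk => /= /(g_zero _ _ Hn1 Kr Hm).
have PX : Defs.subset P (fNgN f g zeroM Q (scons (I i) (fun _ => eq one)) W).
  move=> z [q [t [Qq [[y [Wy Hty]] Hz]]]].
  exists (scons q (scons t (fun _ => zeroM))); split => // [[|[|k]]] Hk //=.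
  exists (scons (r i) (fun _ => one)), y; split => // [[|k]] Hk' //=.
  by exists one; rewrite (mul_1 _ Kr).
have EP : seteq P Q.
  case: Hmax => _ _ Hmx; apply: Hmx => // [[z [Pz Sz]]]; apply: notXi; exists z; split => //.
  exact: PX.
move=> z Hz; apply/(EP z); exists zeroM, z; split => //; split.
  by exists a; split.
by apply/(oplus_C _ _ _ Hm1 Hc); apply/(oplus_e _ _ Hc).
Qed.
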